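(* Let $M$ be a circulant $n\times n$ matrix over $\mathbb{Z}_4+u\mathbb{Z}_4$. Then the matrix $[I_n\,|\,M]$ generates a formally self-dual code over $\mathbb{Z}_4+u\mathbb{Z}_4$ (of length $2n$).
   Context: $\mathbb{Z}_4+u\mathbb{Z}_4$ is the commutative ring of characteristic $4$ with $u^2=0$. A linear code of length $N$ is a submodule of $(\mathbb{Z}_4+u\mathbb{Z}_4)^N$; its dual is taken with respect to the Euclidean inner product $\sum_i x_iy_i$ in the ring. The Lee weight on $\mathbb{Z}_4+u\mathbb{Z}_4$ is $w_L(a+ub)=w_L(b)+w_L(a+b)$, where the Lee weight on $\mathbb{Z}_4$ is $0,1,2,1$ for $0,1,2,3$, extended additively to vectors. A linear code is formally self-dual if it has the same Lee weight enumerator as its dual. A circulant matrix is one in which each row is the cyclic shift by one position to the right of the previous row. *)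

(* Defs.v *)
From mathcomp Require Import all_boot all_order all_algebra.
Set Implicit Arguments. Unset Strict Implicit. Unset Printing Implicit Defensive.
Import GRing.Theory.
Local Open Scope ring_scope.

(* The ring Z4 + u Z4 (u^2 = 0): the pair (a, b) represents a + u b. *)
Definition Ru : Type := ('Z_4 * 'Z_4)%type.

Definition Ru0 : Ru := (0, 0).
Definition Ru1 : Ru := (1, 0).
Definition Radd (x y : Ru) : Ru := (x.1 + y.1, x.2 + y.2).
(* (a + ub)(c + ud) = ac + u(ad + bc) since u^2 = 0 *)
Definition Rmul (x y : Ru) : Ru := (x.1 * y.1, x.1 * y.2 + x.2 * y.1).
Definition Rsum (I : finType) (f : I -> Ru) : Ru :=
  (\sum_(i : I) (f i).1, \sum_(i : I) (f i).2).

Definition leeZ4 (x : 'Z_4) : nat := minn (x : nat) (4 - x)%N.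
Definition leeR (x : Ru) : nat := (leeZ4 x.2 + leeZ4 (x.1 + x.2)%R)%N.

Definition word (N : nat) := {ffun 'I_N -> Ru}.
Definition leeW (N : nat) (x : word N) : nat := (\sum_(j < N) leeR (x j))%N.

Definition dotR (N : nat) (x y : word N) : Ru := Rsum (fun j : 'I_N => Rmul (x j) (y j)).

Definition gen_code (k N : nat) (G : 'I_k -> 'I_N -> Ru) : {set word N} :=
  [set x : word N | [exists c : {ffun 'I_k -> Ru},
      x == [ffun j => Rsum (fun i : 'I_k => Rmul (c i) (G i j))]]].

Definition dual_code (N : nat) (C : {set word N}) : {set word N} :=
  [set y : word N | [forall x in C, dotR x y == Ru0]].

Definition formally_self_dual (N : nat) (C : {set word N}) : Prop :=
  forall w : nat,
    #|[set x in C | leeW x == w]| = #|[set y in dual_code C | leeW y == w]|.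

Definition circulant (n : nat) (M : 'I_n -> 'I_n -> Ru) : Prop :=
  forall i j : 'I_n, (i.+1 < n)%N -> M (ordS i) (ordS j) = M i j.

Definition id_cat (n : nat) (M : 'I_n -> 'I_n -> Ru) : 'I_n -> 'I_(n + n) -> Ru :=
  fun i j => match split j with
             | inl k => if i == k then Ru1 else Ru0
             | inr k => M i k
             end.

(* Main.v *)
Require Import Defs.
From mathcomp Require Import all_boot all_order all_algebra.
From mathcomp Require Import ring zify.
Set Implicit Arguments. Unset Strict Implicit. Unset Printing Implicit Defensive.
Import GRing.Theory.
Local Open Scope ring_scope.

Definition Rneg (x : Ru) : Ru := (- x.1, - x.2).

Lemma Ru_eq (x y : Ru) : x.1 = y.1 -> x.2 = y.2 -> x = y.
Proof. by case: x y => ? ? [? ?] /= -> ->. Qed.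

Lemma Rsum_ext (I : finType) (f g : I -> Ru) : f =1 g -> Rsum f = Rsum g.
Proof. by move=> e; apply: Ru_eq; apply: eq_bigr => i _; rewrite e. Qed.

Lemma Rsum_add (I : finType) (f g : I -> Ru) :
  Rsum (fun i => Radd (f i) (g i)) = Radd (Rsum f) (Rsum g).
Proof. by apply: Ru_eq; rewrite /= big_split. Qed.

Lemma Rmul_sumr (I : finType) a (f : I -> Ru) :
  Rmul a (Rsum f) = Rsum (fun i => Rmul a (f i)).
Proof. by apply: Ru_eq; rewrite /= ?big_split /= ?mulr_sumr ?mulr_suml. Qed.

Lemma Rmul_suml (I : finType) a (f : I -> Ru) :
  Rmul (Rsum f) a = Rsum (fun i => Rmul (f i) a).
Proof. by apply: Ru_eq; rewrite /= ?big_split /= ?mulr_sumr ?mulr_suml. Qed.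

Lemma Rsum_exch (I J : finType) (F : I -> J -> Ru) :
  Rsum (fun i => Rsum (fun j => F i j)) = Rsum (fun j => Rsum (fun i => F i j)).
Proof. by apply: Ru_eq; rewrite /= exchange_big. Qed.

Lemma RmulA x y z : Rmul x (Rmul y z) = Rmul (Rmul x y) z.
Proof. by apply: Ru_eq; rewrite /=; ring. Qed.

Lemma RmulC x y : Rmul x y = Rmul y x.
Proof. by apply: Ru_eq; rewrite /=; ring. Qed.

Lemma RmulDr x y z : Rmul x (Radd y z) = Radd (Rmul x y) (Rmul x z).
Proof. by apply: Ru_eq; rewrite /=; ring. Qed.

Lemma Rmul1 x : Rmul Ru1 x = x.
Proof. by apply: Ru_eq; rewrite /=; ring. Qed.

Lemma Rmul0 x : Rmul x Ru0 = Ru0.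
Proof. by apply: Ru_eq; rewrite /=; ring. Qed.

Lemma Rmul0l x : Rmul Ru0 x = Ru0.
Proof. by apply: Ru_eq; rewrite /=; ring. Qed.

Lemma Rsum0 (I : finType) : Rsum (fun _ : I => Ru0) = Ru0.
Proof. by apply: Ru_eq; rewrite /= big1. Qed.

Lemma Rsum_split n (f : 'I_(n + n) -> Ru) :
  Rsum f = Radd (Rsum (fun i => f (lshift n i))) (Rsum (fun i => f (rshift n i))).
Proof. by apply: Ru_eq; rewrite /= big_split_ord. Qed.

Lemma Rsum_rev n (f : 'I_n -> Ru) : Rsum f = Rsum (fun i => f (rev_ord i)).
Proof. by apply: Ru_eq; rewrite /= (reindex_inj rev_ord_inj). Qed.

Lemma Rsum_delta (I : finType) (c : I -> Ru) (k : I) :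
  Rsum (fun i => Rmul (c i) (if i == k then Ru1 else Ru0)) = c k.
Proof.
apply: Ru_eq; rewrite /= (bigD1 k) //= eqxx big1 => [|i /negbTE -> /=]; rewrite /Ru1 /Ru0 /=; ring.
Qed.

Lemma Radd_negl x : Radd (Rneg x) x = Ru0.
Proof. by apply: Ru_eq; rewrite /=; ring. Qed.

Lemma Radd_eq0 x y : Radd x y = Ru0 -> x = Rneg y.
Proof.
move=> H; have e1 := f_equal fst H; have e2 := f_equal snd H.
by apply: Ru_eq => /=; apply/eqP; rewrite -addr_eq0; apply/eqP.
Qed.

Lemma RnegK x : Rneg (Rneg x) = x.
Proof. by apply: Ru_eq; rewrite /= opprK. Qed.

Lemma leeZ4N (a : 'Z_4) : leeZ4 (- a) = leeZ4 a.
Proof.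
by case: a => [[|[|[|[|m]]]] Hm].
Qed.

Lemma leeRN x : leeR (Rneg x) = leeR x.
Proof. by rewrite /leeR /= -opprD !leeZ4N. Qed.

Lemma circ_shift n (M : 'I_n -> 'I_n -> Ru) : circulant M ->
  forall k (i j i' j' : 'I_n), val i' = (i + k)%N -> val j' = (j + k)%N ->
  M i' j' = M i j.
Proof.
move=> hM; elim=> [|k IH] i j i' j' ei ej.
  rewrite addn0 in ei; rewrite addn0 in ej.
  by rewrite (val_inj ei) (val_inj ej).
have hi : (i + k < n)%N by have := ltn_ord i'; rewrite ei; lia.
have hj : (j + k < n)%N by have := ltn_ord j'; rewrite ej; lia.
rewrite -(IH i j (Ordinal hi) (Ordinal hj)) //.
have hi1 : ((Ordinal hi).+1 < n)%N by have := ltn_ord i'; rewrite ei /=; lia.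
rewrite -(hM _ _ hi1).
have -> : i' = ordS (Ordinal hi).
  apply: val_inj; rewrite /= ei modn_small; first lia.
  by have := ltn_ord i'; rewrite ei; lia.
have -> // : j' = ordS (Ordinal hj).
apply: val_inj; rewrite /= ej modn_small; first lia.
by have := ltn_ord j'; rewrite ej; lia.
Qed.

Lemma Msym n (M : 'I_n -> 'I_n -> Ru) : circulant M ->
  forall i l : 'I_n, M i (rev_ord l) = M l (rev_ord i).
Proof.
move=> hM i l; have hl := ltn_ord l; have hi := ltn_ord i.
case: (leqP i l) => h.
  by symmetry; apply: (circ_shift hM (k := (l - i)%N)) => /=; lia.
by apply: (circ_shift hM (k := (i - l)%N)) => /=; lia.
Qed.

Definition cw n (M : 'I_n -> 'I_n -> Ru) (c : {ffun 'I_n -> Ru}) : word (n + n) :=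
  [ffun j => Rsum (fun i => Rmul (c i) (id_cat M i j))].

Lemma split_l n (k : 'I_n) : split (lshift n k) = inl k.
Proof. exact: (unsplitK (inl _ k)). Qed.
Lemma split_r n (k : 'I_n) : split (rshift n k) = inr k.
Proof. exact: (unsplitK (inr _ k)). Qed.

Lemma cw_l n M c (k : 'I_n) : cw M c (lshift n k) = c k.
Proof. by rewrite ffunE /id_cat split_l Rsum_delta. Qed.

Lemma cw_r n M c (k : 'I_n) :
  cw M c (rshift n k) = Rsum (fun i => Rmul (c i) (M i k)).
Proof. by rewrite ffunE /id_cat split_r. Qed.

Lemma memC n (M : 'I_n -> 'I_n -> Ru) x :
  x \in gen_code (id_cat M) <-> exists c, x = cw M c.
Proof.
rewrite inE; split; first by case/existsP => c /eqP ->; exists c.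
by case=> c ->; apply/existsP; exists c.
Qed.

Lemma dot_cw n (M : 'I_n -> 'I_n -> Ru) c y :
  dotR (cw M c) y = Rsum (fun i => Rmul (c i)
     (Radd (y (lshift n i)) (Rsum (fun k => Rmul (M i k) (y (rshift n k)))))).
Proof.
rewrite /dotR Rsum_split.
under Rsum_ext => i do rewrite cw_l.
under [X in Radd _ X]Rsum_ext => k do rewrite cw_r Rmul_suml.
under [RHS]Rsum_ext => i do rewrite RmulDr.
rewrite Rsum_add; congr Radd.
rewrite Rsum_exch; apply: Rsum_ext => i; rewrite Rmul_sumr.
by apply: Rsum_ext => k; rewrite RmulA.
Qed.

Definition rowc n (M : 'I_n -> 'I_n -> Ru) (y : word (n + n)) :=
  forall i, Radd (y (lshift n i)) (Rsum (fun k => Rmul (M i k) (y (rshift n k)))) = Ru0.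

Lemma memD n (M : 'I_n -> 'I_n -> Ru) y :
  y \in dual_code (gen_code (id_cat M)) <-> rowc M y.
Proof.
rewrite inE; split.
  move/forall_inP => H i.
  have := H (cw M [ffun j => if j == i then Ru1 else Ru0]).
  rewrite dot_cw => /(_ (proj2 (memC _ _) (ex_intro _ _ erefl))) /eqP <-.
  under [RHS]Rsum_ext => l do rewrite ffunE RmulC.
  by rewrite Rsum_delta.
move=> H; apply/forall_inP => x /memC [c ->]; rewrite dot_cw.
under Rsum_ext => i do rewrite H Rmul0.
by rewrite Rsum0.
Qed.

Definition fmap n (x : word (n + n)) : word (n + n) :=
  [ffun j => match split j with
             | inl i => Rneg (x (rshift n (rev_ord i)))
             | inr k => x (lshift n (rev_ord k)) end].
Definition gmap n (y : word (n + n)) : word (n + n) :=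
  [ffun j => match split j with
             | inl i => y (rshift n (rev_ord i))
             | inr k => Rneg (y (lshift n (rev_ord k))) end].

Lemma fl n x (i : 'I_n) : fmap x (lshift n i) = Rneg (x (rshift n (rev_ord i))).
Proof. by rewrite ffunE split_l. Qed.
Lemma fr n x (i : 'I_n) : fmap x (rshift n i) = x (lshift n (rev_ord i)).
Proof. by rewrite ffunE split_r. Qed.
Lemma gl n y (i : 'I_n) : gmap y (lshift n i) = y (rshift n (rev_ord i)).
Proof. by rewrite ffunE split_l. Qed.
Lemma gr n y (i : 'I_n) : gmap y (rshift n i) = Rneg (y (lshift n (rev_ord i))).
Proof. by rewrite ffunE split_r. Qed.

Lemma gfK n : cancel (@fmap n) (@gmap n).
Proof.
move=> x; apply/ffunP => j; case: (split_ordP j) => i ->.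
  by rewrite gl fr rev_ordK.
by rewrite gr fl rev_ordK RnegK.
Qed.

Lemma fgK n : cancel (@gmap n) (@fmap n).
Proof.
move=> x; apply/ffunP => j; case: (split_ordP j) => i ->.
  by rewrite fl gr rev_ordK RnegK.
by rewrite fr gl rev_ordK.
Qed.

Lemma leeW_f n (x : word (n + n)) : leeW (fmap x) = leeW x.
Proof.
rewrite /leeW !big_split_ord /= [RHS]addnC; congr addn.
  rewrite [LHS](reindex_inj rev_ord_inj) /=; apply: eq_bigr => i _.
  by rewrite fl rev_ordK leeRN.
rewrite [LHS](reindex_inj rev_ord_inj) /=; apply: eq_bigr => i _.
by rewrite fr rev_ordK.
Qed.

Lemma fC n (M : 'I_n -> 'I_n -> Ru) : circulant M -> forall x,
  x \in gen_code (id_cat M) -> fmap x \in dual_code (gen_code (id_cat M)).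
Proof.
move=> hM x /memC [c ->]; apply/memD => i.
rewrite fl cw_r.
under [X in Radd _ X]Rsum_ext => k do rewrite fr cw_l.
rewrite [X in Radd _ X]Rsum_rev.
under [X in Radd _ X]Rsum_ext => k do rewrite rev_ordK Msym // RmulC.
exact: Radd_negl.
Qed.

Lemma gD n (M : 'I_n -> 'I_n -> Ru) : circulant M -> forall y,
  y \in dual_code (gen_code (id_cat M)) -> gmap y \in gen_code (id_cat M).
Proof.
move=> hM y /memD H; apply/memC.
exists [ffun i => y (rshift n (rev_ord i))].
apply/ffunP => j; case: (split_ordP j) => k ->.
  by rewrite gl cw_l ffunE.
rewrite gr cw_r (Radd_eq0 (H (rev_ord k))) RnegK Rsum_rev.
apply: Rsum_ext => i; rewrite ffunE RmulC; congr Rmul.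
by rewrite Msym // rev_ordK.
Qed.

Theorem theorem5p2 (n : nat) (M : 'I_n -> 'I_n -> Ru) :
  circulant M -> formally_self_dual (gen_code (id_cat M)).
Proof.
move=> hM w.
have E : [set y in dual_code (gen_code (id_cat M)) | leeW y == w] =
         (@fmap n) @: [set x in gen_code (id_cat M) | leeW x == w].
  apply/setP => y; apply/idP/idP.
    rewrite inE => /andP [yD /eqP yw]; apply/imsetP; exists (gmap y);
      last by rewrite fgK.
    by rewrite inE gD //= -leeW_f fgK yw.
  case/imsetP => x + ->; rewrite [in X in X -> _]inE => /andP [xC /eqP xw].
  by rewrite inE fC //= leeW_f xw.
by rewrite E card_imset //; apply: (can_inj (@gfK n)).
Qed.
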